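(* Let $q=n-k$, write $\mathbb R^n=\mathbb R^k\times\mathbb R^q$, let $E\subset\mathbb R^q$ be open and $B\colon E\to\mathrm{Hom}(\mathbb R^k,\mathbb R^q)$ continuous, and for $y\in E$ let $P_y=\{(t,\,y+B(y)t):t\in\mathbb R^k\}$. Suppose the planes $P_y$, $y\in E$, form a fibration of an open subset $T\subset\mathbb R^n$. Define $A\colon E\to\mathrm{Hom}(\mathbb R^{k+1},\mathbb R^q)$ by $A(y)(t,\lambda)=B(y)t+\lambda y$. Then the fibration is skew if and only if $\mathrm{Ker}(A(x)-A(y))=0$ for every pair of distinct $x,y\in E$.
   Context: A fibration of an open set $T$ by oriented affine $k$-planes is a family of pairwise disjoint oriented affine $k$-planes with union $T$ such that the map sending a point to its fiber is continuous. It is skew if any two distinct fibers are disjoint and contain no parallel lines. *)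

(* Defs.v *)
From HB Require Import structures.
From mathcomp Require Import all_boot all_order all_algebra.
From mathcomp Require Import all_classical all_reals all_analysis.
Set Implicit Arguments. Unset Strict Implicit. Unset Printing Implicit Defensive.
Import Order.TTheory GRing.Theory Num.Theory.
Import numFieldNormedType.Exports.
Local Open Scope classical_set_scope.
Local Open Scope ring_scope.

(* Points of R^n = R^k x R^q are pairs (t, z) with t : 'rV_k, z : 'rV_q.
   Linear maps are matrices acting on row vectors: t |-> t *m M. *)

Definition plane (R : realType) (k q : nat) (B : 'rV[R]_q -> 'M[R]_(k, q))
  (y : 'rV[R]_q) : set ('rV[R]_k * 'rV[R]_q) :=
  [set (t, y + t *m B y) | t in [set: 'rV[R]_k]].

Definition is_fibration (R : realType) (k q : nat) (E : set 'rV[R]_q)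
  (P : 'rV[R]_q -> set ('rV[R]_k * 'rV[R]_q)) (T : set ('rV[R]_k * 'rV[R]_q)) :=
  [/\ open T,
      (forall x y, E x -> E y -> x != y -> P x `&` P y = set0),
      T = \bigcup_(y in E) P y &
      exists f : 'rV[R]_k * 'rV[R]_q -> 'rV[R]_q,
        (forall p, T p -> E (f p) /\ P (f p) p) /\ {within T, continuous f}].

Definition is_line (R : realType) (V : lmodType R) (L : set V) :=
  exists (p v : V), v != 0 /\ L = [set p + s *: v | s in [set: R]].

Definition parallel_lines (V : zmodType) (L1 L2 : set V) :=
  exists w : V, L2 = [set x + w | x in L1].

Definition skew_family (R : realType) (k q : nat) (E : set 'rV[R]_q)
  (P : 'rV[R]_q -> set ('rV[R]_k * 'rV[R]_q)) :=
  forall x y, E x -> E y -> x != y ->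
    P x `&` P y = set0 /\
    ~ (exists L1 L2 : set ('rV[R]_k * 'rV[R]_q),
          [/\ is_line L1, is_line L2, L1 `<=` P x, L2 `<=` P y &
              parallel_lines L1 L2]).

Definition Amap (R : realType) (k q : nat) (B : 'rV[R]_q -> 'M[R]_(k, q))
  (y : 'rV[R]_q) (v : 'rV[R]_k * R) : 'rV[R]_q :=
  v.1 *m B y + v.2 *: y.

(* Main.v *)
Require Import Defs.
From HB Require Import structures.
From mathcomp Require Import all_boot all_order all_algebra.
From mathcomp Require Import all_classical all_reals all_analysis.
Import Order.TTheory GRing.Theory Num.Theory.
Import numFieldNormedType.Exports.
Local Open Scope classical_set_scope.
Local Open Scope ring_scope.

Section H.
Variables (R : realType) (k q : nat).
Implicit Types (a c : 'rV[R]_k) (b d : 'rV[R]_q).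

Lemma pairD a b c d : (a, b) + (c, d) = (a + c, b + d). Proof. by []. Qed.
Lemma pairZ (s : R) a b : s *: (a, b) = (s *: a, s *: b). Proof. by []. Qed.
Lemma pair0 : (0 : 'rV[R]_k * 'rV[R]_q) = (0, 0). Proof. by []. Qed.

Lemma planeE (B : 'rV[R]_q -> 'M[R]_(k, q)) x (z : 'rV[R]_k * 'rV[R]_q) :
  plane B x z -> z.2 = x + z.1 *m B x.
Proof. by case=> t _ <-. Qed.
End H.
Arguments planeE {R k q B x z}.

Theorem lemma3p3 (R : realType) (k q : nat) (E : set 'rV[R]_q)
  (B : 'rV[R]_q -> 'M[R]_(k, q)) (T : set ('rV[R]_k * 'rV[R]_q)) :
  open E -> {within E, continuous B} ->
  is_fibration E (plane B) T ->
  (skew_family E (plane B) <->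
   forall x y, E x -> E y -> x != y ->
     forall v : 'rV[R]_k * R, Amap B x v - Amap B y v = 0 -> v = 0).
Proof.
move=> _ _ [_ Hdisj _ _]; split.
- move=> Hsk x y Ex Ey xy [t l]; rewrite /Amap /= => H.
  have [l0|ln0] := eqVneq l 0.
  + subst l; move: H; rewrite !scale0r !addr0 => /eqP; rewrite subr_eq0 => /eqP H.
    have [->//|tn0] := eqVneq t 0; exfalso.
    have [_ Hnp] := Hsk x y Ex Ey xy; apply: Hnp.
    pose v : 'rV[R]_k * 'rV[R]_q := (t, t *m B x).
    exists [set (0, x) + s *: v | s in [set: R]].
    exists [set (0, y) + s *: v | s in [set: R]].
    split.
    * exists (0, x), v; split => //.
      apply/eqP => /(congr1 fst) /= H0; by rewrite H0 eqxx in tn0.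
    * exists (0, y), v; split => //.
      apply/eqP => /(congr1 fst) /= H0; by rewrite H0 eqxx in tn0.
    * move=> _ [s _ <-]; exists (s *: t) => //.
      by rewrite pairZ pairD add0r scalemxAl.
    * move=> _ [s _ <-]; exists (s *: t) => //.
      by rewrite pairZ pairD add0r H scalemxAl.
    * exists (0, y - x); apply/seteqP; split.
      - move=> _ [s _ <-].
        exists ((0, x) + s *: v); first by exists s.
        rewrite /v pairZ !pairD !add0r addr0; congr pair.
        by rewrite addrAC addrCA subrr addr0.
      - move=> _ [_ [s _ <-] <-]; exists s => //.
        rewrite /v pairZ !pairD !add0r addr0; congr pair.
        by rewrite addrAC addrCA subrr addr0.
  + exfalso.
    set a := l^-1 *: t.
    have : (plane B x `&` plane B y) (a, x + a *m B x).
      split; first by exists a.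
      exists a => //; congr pair.
      apply/eqP; rewrite eq_sym -subr_eq0.
      have -> : x + a *m B x - (y + a *m B y) =
          l^-1 *: (t *m B x + l *: x - (t *m B y + l *: y)).
        rewrite /a scalerDr scalerN !scalerDr !scalemxAl !scalerA mulVf //.
        by rewrite !scale1r [_ + x]addrC [_ + y]addrC.
      by rewrite H scaler0.
    by rewrite Hdisj.
- move=> Hcond x y Ex Ey xy; split; first exact: Hdisj.
  move=> [L1 [L2 [[p [v [vn0 EL1]]] _ S1 S2 [w Hw]]]].
  have S2' : forall z, L1 z -> plane B y (z + w).
    by move=> z Lz; apply: S2; rewrite Hw; exists z.
  have L0 : L1 p by rewrite EL1; exists 0 => //; rewrite scale0r addr0.
  have L1' : L1 (p + v) by rewrite EL1; exists 1 => //; rewrite scale1r.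
  have e1 := planeE (S1 _ L0); have e2 := planeE (S1 _ L1').
  have e3 := planeE (S2' _ L0); have e4 := planeE (S2' _ L1').
  have vx : v.2 = v.1 *m B x.
    have -> : v.2 = (p + v).2 - p.2 by rewrite /= addrC addKr.
    by rewrite e1 e2 /= mulmxDl opprD addrACA subrr add0r addrC addKr.
  have vy : v.2 = v.1 *m B y.
    have -> : v.2 = (p + v + w).2 - (p + w).2.
      by rewrite /= [p.2 + v.2 + w.2]addrAC addrC addrK.
    rewrite e3 e4 /= opprD addrACA subrr add0r !mulmxDl.
    by rewrite [p.1 *m B y + _ + _]addrAC [X in X - _]addrC addrK.
  have := Hcond x y Ex Ey xy (v.1, 0).
  rewrite /Amap /= !scale0r !addr0 -vx -vy subrr => /(_ erefl) /(congr1 fst) /= v10.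
  move/eqP: vn0; apply; rewrite [v]surjective_pairing pair0; congr pair => //.
  by rewrite vx v10 mul0mx.
Qed.
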